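(* A finitely generated group with the Powers property is not presentable by a product.
   Context: (de la Harpe) A group $\Gamma\neq\{1\}$ is a Powers group (has the Powers property) if for every finite subset $F\subset\Gamma\setminus\{1\}$ and every integer $N\ge 1$ there exist a partition $\Gamma=D\sqcup E$ and elements $\gamma_1,\dots,\gamma_N\in\Gamma$ such that $fD\cap D=\emptyset$ for all $f\in F$ and $\gamma_jE\cap\gamma_kE=\emptyset$ for all $j\neq k$. An infinite group $\Gamma$ is not presentable by a product if for every homomorphism $\varphi\colon \Gamma_1\times\Gamma_2\to\Gamma$ whose image has finite index in $\Gamma$, at least one of $\varphi(\Gamma_1)$, $\varphi(\Gamma_2)$ is finite. *)

(* Defs.v *)
From Stdlib Require Import List.
Import ListNotations.

Record group : Type := Group {
  carrier :> Type;
  gmul : carrier -> carrier -> carrier;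
  gone : carrier;
  ginv : carrier -> carrier;
  gmulA : forall x y z, gmul x (gmul y z) = gmul (gmul x y) z;
  gmul1 : forall x, gmul gone x = x;
  gmulg1 : forall x, gmul x gone = x;
  gmulV : forall x, gmul (ginv x) x = gone;
  gmulgV : forall x, gmul x (ginv x) = gone
}.

Arguments gmul {g}.
Arguments gone {g}.
Arguments ginv {g}.

Definition finite_set {T : Type} (S : T -> Prop) : Prop :=
  exists l : list T, forall x, S x -> In x l.

Definition infinite_group (G : group) : Prop :=
  ~ finite_set (fun _ : G => True).

Inductive generated {G : group} (S : G -> Prop) : G -> Prop :=
| gen_one : generated S gone
| gen_in : forall x, S x -> generated S x
| gen_mul : forall x y, generated S x -> generated S y -> generated S (gmul x y)
| gen_inv : forall x, generated S x -> generated S (ginv x).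

Definition finitely_generated (G : group) : Prop :=
  exists l : list G, forall g : G, generated (fun x => In x l) g.

Definition finite_index {G : group} (H : G -> Prop) : Prop :=
  exists l : list G, forall g : G,
    exists c h, In c l /\ H h /\ g = gmul c h.

(** A homomorphism from the direct product G1 x G2 to G, written as a
    two-argument map phi (a, b) = phi a b. *)
Definition prod_hom {G1 G2 G : group} (phi : G1 -> G2 -> G) : Prop :=
  forall a a' b b', phi (gmul a a') (gmul b b') = gmul (phi a b) (phi a' b').

Definition not_presentable_by_product (G : group) : Prop :=
  infinite_group G /\
  forall (G1 G2 : group) (phi : G1 -> G2 -> G),
    prod_hom phi ->
    finite_index (fun g => exists a b, g = phi a b) ->
    finite_set (fun g => exists a, g = phi a gone) \/
    finite_set (fun g => exists b, g = phi gone b).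

Definition powers_group (G : group) : Prop :=
  (exists g : G, g <> gone) /\
  forall (F : list G) (N : nat),
    (forall f, In f F -> f <> gone) -> 1 <= N ->
    exists (D E : G -> Prop) (gam : nat -> G),
      (forall x, D x \/ E x) /\ (forall x, ~ (D x /\ E x)) /\
      (forall f, In f F -> forall x, D x -> ~ D (gmul f x)) /\
      (forall j k, 1 <= j <= N -> 1 <= k <= N -> j <> k ->
         forall x y, E x -> E y -> gmul (gam j) x <> gmul (gam k) y).

(* Main.v *)
Require Import Defs.
From Stdlib Require Import List Classical ClassicalEpsilon Lia.
Import ListNotations.

Definition cdec {T : Type} : forall x y : T, {x = y} + {x <> y} :=
  fun x y => excluded_middle_informative (x = y).

Lemma pigeon2 {T : Type} (P : nat -> T -> Prop) : forall n (l : list T),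
  length l < n -> (forall j, j < n -> exists c, In c l /\ P j c) ->
  exists i k c, i < k < n /\ P i c /\ P k c.
Proof.
  induction n as [|n IH]; intros l Hl H; [lia|].
  destruct (H n ltac:(lia)) as [c0 [Hc0 Pc0]].
  destruct (classic (exists i, i < n /\ P i c0)) as [[i [Hi Pi]]|Hno].
  - exists i, n, c0. repeat split; auto; lia.
  - destruct (IH (remove cdec c0 l)) as [i [k [c [Hik [Pi Pk]]]]].
    + pose proof (remove_length_lt cdec l c0 Hc0). lia.
    + intros j Hj. destruct (H j ltac:(lia)) as [c [Hc Pc]].
      exists c. split; auto. apply in_in_remove; auto.
      intro e; subst; apply Hno; eauto.
    + exists i, k, c. repeat split; auto; lia.
Qed.

Section GL.
Variable G : group.

Lemma mul_inv_unique (x y : G) : gmul x y = gone -> y = ginv x.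
Proof.
  intro H. transitivity (gmul (gmul (ginv x) x) y).
  - rewrite gmulV, gmul1. reflexivity.
  - rewrite <- gmulA, H, gmulg1. reflexivity.
Qed.

Lemma idem_one (x : G) : gmul x x = x -> x = gone.
Proof.
  intro H. transitivity (gmul (ginv x) (gmul x x)).
  - rewrite gmulA, gmulV, gmul1. reflexivity.
  - rewrite H, gmulV. reflexivity.
Qed.

Lemma inv_mul (x y : G) : ginv (gmul x y) = gmul (ginv y) (ginv x).
Proof.
  symmetry. apply mul_inv_unique.
  rewrite !gmulA. rewrite <- (gmulA G x y). rewrite gmulgV, gmulg1, gmulgV. reflexivity.
Qed.

Lemma conj_shift (g p z : G) :
  gmul p (gmul (ginv g) z) = gmul (ginv g) (gmul (gmul (gmul g p) (ginv g)) z).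
Proof. rewrite !gmulA, gmulV, gmul1. reflexivity. Qed.

Lemma conj_mul (c h p : G) :
  gmul (gmul (gmul c h) p) (ginv (gmul c h)) =
  gmul (gmul c (gmul (gmul h p) (ginv h))) (ginv c).
Proof. rewrite inv_mul, !gmulA. reflexivity. Qed.

Lemma conj_comm (c x y : G) : gmul x y = gmul y x ->
  gmul (gmul (gmul c x) (ginv c)) (gmul (gmul c y) (ginv c)) =
  gmul (gmul (gmul c y) (ginv c)) (gmul (gmul c x) (ginv c)).
Proof.
  intro H.
  transitivity (gmul (gmul c (gmul x y)) (ginv c)).
  - rewrite !gmulA. rewrite <- (gmulA G (gmul c x) (ginv c) c), gmulV, gmulg1. reflexivity.
  - rewrite H. rewrite !gmulA. rewrite <- (gmulA G (gmul c y) (ginv c) c), gmulV, gmulg1. reflexivity.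
Qed.

Lemma nonone_conj (x g : G) : g <> gone -> gmul x (gmul g (ginv x)) <> gone.
Proof.
  intros Hg H. apply Hg.
  assert (gmul (ginv x) (gmul (gmul x (gmul g (ginv x))) x) = g) as E.
  { rewrite !gmulA, gmulV, gmul1, <- gmulA, gmulV, gmulg1. reflexivity. }
  rewrite <- E, H, gmul1, gmulV. reflexivity.
Qed.
End GL.

Section Hom.
Variables (G1 G2 G : group) (phi : G1 -> G2 -> G).
Hypothesis hom : prod_hom phi.

Lemma phi11 : phi gone gone = gone.
Proof.
  apply idem_one. rewrite <- hom, !gmul1. reflexivity.
Qed.

Lemma phi_inv x y : phi (ginv x) (ginv y) = ginv (phi x y).
Proof.
  apply mul_inv_unique. rewrite <- hom, !gmulgV. apply phi11.
Qed.

Lemma phi_conj u v x :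
  gmul (gmul (phi u v) (phi x gone)) (ginv (phi u v)) =
  phi (gmul (gmul u x) (ginv u)) gone.
Proof.
  rewrite <- phi_inv, <- !hom, gmulg1, gmulgV. reflexivity.
Qed.

Lemma phi_conj2 u v y :
  gmul (gmul (phi u v) (phi gone y)) (ginv (phi u v)) =
  phi gone (gmul (gmul v y) (ginv v)).
Proof.
  rewrite <- phi_inv, <- !hom, gmulg1, gmulgV. reflexivity.
Qed.

Lemma phi_comm x y : gmul (phi x gone) (phi gone y) = gmul (phi gone y) (phi x gone).
Proof. rewrite <- !hom, !gmulg1, !gmul1. reflexivity. Qed.
End Hom.

Theorem proposition5p1 (G : group) :
  finitely_generated G -> powers_group G -> not_presentable_by_product G.
Proof.
  intros _ [[g Hg] HPow]. split.
  - intros [l Hl].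
    set (F := map (fun x => gmul x (gmul g (ginv x))) l).
    destruct (HPow F 3) as [D [E [gam [Hpart [Hdisj [HfD Hgam]]]]]].
    { intros f Hf. unfold F in Hf. apply in_map_iff in Hf.
      destruct Hf as [x [<- _]]. apply nonone_conj; auto. }
    { lia. }
    assert (Htwo : forall j k z, 1 <= j <= 3 -> 1 <= k <= 3 -> j <> k ->
      E (gmul (ginv (gam j)) z) -> E (gmul (ginv (gam k)) z) -> False).
    { intros j k z Hj Hk Hjk Ej Ek. apply (Hgam j k Hj Hk Hjk _ _ Ej Ek).
      rewrite !gmulA, !gmulgV, !gmul1. reflexivity. }
    assert (HD : forall x, ~ E x -> D x) by (intros x Hx; destruct (Hpart x); tauto).
    assert (HE : forall x, ~ D x -> E x) by (intros x Hx; destruct (Hpart x); tauto).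
    assert (Key : forall j z, D (gmul (ginv (gam j)) z) -> E (gmul (ginv (gam j)) (gmul g z))).
    { intros j z Dz. apply HE. intro Dg.
      refine (HfD (gmul (ginv (gam j)) (gmul g (ginv (ginv (gam j))))) _ _ Dz _).
      - unfold F. apply in_map_iff. eexists; split; [reflexivity|]. apply Hl; auto.
      - assert (ginv (ginv (gam j)) = gam j) as Hii.
        { symmetry. apply mul_inv_unique. apply gmulV. }
        rewrite Hii.
        replace (gmul (gmul (ginv (gam j)) (gmul g (gam j))) (gmul (ginv (gam j)) z))
          with (gmul (ginv (gam j)) (gmul g z)); [exact Dg|].
        rewrite !gmulA. rewrite <- (gmulA G _ (gam j) (ginv (gam j))), gmulgV, gmulg1.
        reflexivity. }
    set (z := @gone G).
    assert (Hne : forall j k, 1 <= j <= 3 -> 1 <= k <= 3 -> j <> k ->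
       E (gmul (ginv (gam j)) z) -> D (gmul (ginv (gam k)) z)).
    { intros j k Hj Hk Hjk Ej. apply HD. intro Ek. exact (Htwo j k z Hj Hk Hjk Ej Ek). }
    destruct (classic (E (gmul (ginv (gam 1)) z))) as [E1|E1].
    + apply (Htwo 2 3 (gmul g z)); try lia; apply Key; apply (Hne 1); auto; lia.
    + destruct (classic (E (gmul (ginv (gam 2)) z))) as [E2|E2].
      * apply (Htwo 1 3 (gmul g z)); try lia; apply Key; [apply HD; auto|].
        apply (Hne 2); auto; lia.
      * apply (Htwo 1 2 (gmul g z)); try lia; apply Key; apply HD; auto.
  - intros G1 G2 phi hom [l Hl].
    destruct (classic (forall a, phi a gone = gone)) as [HA|HA].
    { left. exists [gone]. intros x [a ->]. rewrite HA. left; reflexivity. }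
    destruct (classic (forall b, phi gone b = gone)) as [HB|HB].
    { right. exists [gone]. intros x [b ->]. rewrite HB. left; reflexivity. }
    exfalso.
    apply not_all_ex_not in HA. destruct HA as [a Ha].
    apply not_all_ex_not in HB. destruct HB as [b Hb].
    set (p := phi a gone). set (q := phi gone b).
    set (N := length l + 2).
    destruct (HPow [p; q] N) as [D [E [gam [Hpart [Hdisj [HfD Hgam]]]]]].
    { intros f [<-|[<-|[]]]; auto. }
    { unfold N; lia. }
    assert (Htwo : forall j k z, 1 <= j <= N -> 1 <= k <= N -> j <> k ->
      E (gmul (ginv (gam j)) z) -> E (gmul (ginv (gam k)) z) -> False).
    { intros j k z Hj Hk Hjk Ej Ek. apply (Hgam j k Hj Hk Hjk _ _ Ej Ek).
      rewrite !gmulA, !gmulgV, !gmul1. reflexivity. }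
    assert (HD : forall x, ~ E x -> D x) by (intros x Hx; destruct (Hpart x); tauto).
    assert (HE : forall x, ~ D x -> E x) by (intros x Hx; destruct (Hpart x); tauto).
    destruct (pigeon2 (fun j c => exists a' b', gam (S j) = gmul c (phi a' b'))
                (length l + 1) l ltac:(lia)) as [i [k [c [Hik [[a1 [b1 Hi]] [a2 [b2 Hk]]]]]]].
    { intros j Hj. destruct (Hl (gam (S j))) as [c [h [Hc [[a' [b' ->]] Heq]]]].
      exists c. split; auto. eauto. }
    set (P := gmul (gmul (gam (S i)) p) (ginv (gam (S i)))).
    set (Q := gmul (gmul (gam (S k)) q) (ginv (gam (S k)))).
    assert (HPQ : gmul P Q = gmul Q P).
    { unfold P, Q. rewrite Hi, Hk, !conj_mul. unfold p, q.
      rewrite (phi_conj _ _ _ _ hom), (phi_conj2 _ _ _ _ hom).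
      apply conj_comm. apply (phi_comm _ _ _ _ hom). }
    assert (Hx : exists x, E x).
    { destruct (Hpart gone) as [D1|E1]; eauto.
      exists (gmul p gone). apply HE. apply (HfD p (or_introl eq_refl) gone D1). }
    destruct Hx as [x Ex].
    set (y0 := gmul (gam N) x).
    assert (Ht : E (gmul (ginv (gam N)) y0)).
    { unfold y0. rewrite gmulA, gmulV, gmul1. exact Ex. }
    assert (Di : D (gmul (ginv (gam (S i))) y0)).
    { apply HD; intro; eapply (Htwo (S i) N); [| | | eassumption | exact Ht]; unfold N; lia. }
    assert (Dk : D (gmul (ginv (gam (S k))) y0)).
    { apply HD; intro; eapply (Htwo (S k) N); [| | | eassumption | exact Ht]; unfold N; lia. }
    assert (Sp : forall w, D (gmul (ginv (gam (S i))) w) -> E (gmul (ginv (gam (S i))) (gmul P w))).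
    { intros w Dw. apply HE. unfold P. rewrite <- conj_shift.
      apply (HfD p (or_introl eq_refl) _ Dw). }
    assert (Sq : forall w, D (gmul (ginv (gam (S k))) w) -> E (gmul (ginv (gam (S k))) (gmul Q w))).
    { intros w Dw. apply HE. unfold Q. rewrite <- conj_shift.
      apply (HfD q (or_intror (or_introl eq_refl)) _ Dw). }
    assert (E1 : E (gmul (ginv (gam (S k))) (gmul Q (gmul P y0)))).
    { apply Sq. apply HD. intro. eapply (Htwo (S i) (S k)); [| | | apply Sp, Di | eassumption];
      unfold N; lia. }
    assert (E2 : E (gmul (ginv (gam (S i))) (gmul P (gmul Q y0)))).
    { apply Sp. apply HD. intro. eapply (Htwo (S k) (S i)); [| | | apply Sq, Dk | eassumption];
      unfold N; lia. }
    replace (gmul P (gmul Q y0)) with (gmul Q (gmul P y0)) in E2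
      by (rewrite !gmulA, HPQ; reflexivity).
    eapply (Htwo (S i) (S k)); [| | | exact E2 | exact E1]; unfold N; lia.
Qed.
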